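(* Let \(\mathcal G\) and \(\mathcal H\) be topological groupoids. An algebraic morphism \(\mathcal G\curvearrowright\mathcal H\) induces a functor \(F\colon\mathsf{Top}^{\mathcal H}\to\mathsf{Top}^{\mathcal G}\) with \(\mathsf{Forget}\circ F=\mathsf{Forget}\). The functor turns an \(\mathcal H\)-space \(X\) into a \(\mathcal G\)-space by transporting the left \(\mathcal G\)-action on \(\mathcal H^{(1)}\times_{\mathcal H}X\) along the homeomorphism \(\mathcal H^{(1)}\times_{\mathcal H}X\cong X\), \([h,x]\mapsto h\cdot x\). Conversely, every functor \(F\colon\mathsf{Top}^{\mathcal H}\to\mathsf{Top}^{\mathcal G}\) with \(\mathsf{Forget}\circ F=\mathsf{Forget}\) arises in this way from an algebraic morphism \(\mathcal G\curvearrowright\mathcal H\).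
   Context: An action of a topological groupoid \(\mathcal K\) on a topological space \(X\) is a continuous anchor map \(\varrho\colon X\to\mathcal K^{(0)}\) together with a continuous map \(\{(k,x)\in\mathcal K^{(1)}\times X:\mathrm s(k)=\varrho(x)\}\to X\), \((k,x)\mapsto k\cdot x\), such that \(\varrho(k\cdot x)=\mathrm r(k)\), \(k_1\cdot(k_2\cdot x)=(k_1k_2)\cdot x\) when defined, and \(1_{\varrho(x)}\cdot x=x\). A map \(f\colon X\to Y\) between \(\mathcal K\)-spaces is \(\mathcal K\)-equivariant if \(\varrho_Y\circ f=\varrho_X\) and \(f(k\cdot x)=k\cdot f(x)\) whenever defined. \(\mathsf{Top}^{\mathcal K}\) is the category of \(\mathcal K\)-spaces with \(\mathcal K\)-equivariant continuous maps. \(\mathsf{Forget}\colon\mathsf{Top}^{\mathcal K}\to\mathsf{Top}\) forgets the action. An algebraic morphism \(\mathcal G\curvearrowright\mathcal H\) is an action of \(\mathcal G\) on \(\mathcal H^{(1)}\) commuting with the right translation action of \(\mathcal H\) on \(\mathcal H^{(1)}\) (anchor \(\mathrm s\), \(h\cdot h'=hh'\)). Commuting means: the anchor \(\varrho\) satisfies \(\varrho(hh')=\varrho(h)\), and \(g\cdot(hh')=(g\cdot h)h'\) whenever defined. For a right \(\mathcal H\)-space \(Y\) (anchor \(\varrho_Y\)) and a left \(\mathcal H\)-space \(X\) (anchor \(\varrho_X\)), \(Y\times_{\mathcal H}X\) denotes the quotient of \(\{(y,x):\varrho_Y(y)=\varrho_X(x)\}\) by the relation \((y\cdot h,x)\sim(y,h\cdot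 x)\). Here \(\mathcal H^{(1)}\) is a left \(\mathcal G\)-space via the algebraic morphism and a right \(\mathcal H\)-space via right translation, so \(\mathcal H^{(1)}\times_{\mathcal H}X\) inherits a left \(\mathcal G\)-action. *)

(* Defs.v *)
(* topological spaces are mathcomp-analysis
   [topologicalType]s; partial operations of groupoids/actions are encoded
   as total functions whose values only matter on their domain of definition. *)
From HB Require Import structures.
From mathcomp Require Import all_boot all_classical.
From mathcomp Require Import topology.
Set Implicit Arguments. Unset Strict Implicit. Unset Printing Implicit Defensive.
Local Open Scope classical_set_scope.

Record topGroupoid := TopGroupoid {
  gobj : topologicalType;
  garr : topologicalType;
  gs : garr -> gobj;
  gr : garr -> gobj;
  gunit : gobj -> garr;
  ginv : garr -> garr;
  gmul : garr -> garr -> garr;  (* gmul a b = ab, meaningful when gs a = gr b *)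
  gs_unit : forall u, gs (gunit u) = u;
  gr_unit : forall u, gr (gunit u) = u;
  gs_mul : forall a b, gs a = gr b -> gs (gmul a b) = gs b;
  gr_mul : forall a b, gs a = gr b -> gr (gmul a b) = gr a;
  gmulA : forall a b c, gs a = gr b -> gs b = gr c ->
            gmul (gmul a b) c = gmul a (gmul b c);
  gmul1l : forall a, gmul (gunit (gr a)) a = a;
  gmul1r : forall a, gmul a (gunit (gs a)) = a;
  gs_inv : forall a, gs (ginv a) = gr a;
  gr_inv : forall a, gr (ginv a) = gs a;
  gmulV : forall a, gmul a (ginv a) = gunit (gr a);
  gmulVl : forall a, gmul (ginv a) a = gunit (gs a);
  gs_cont : continuous gs;
  gr_cont : continuous gr;
  gunit_cont : continuous gunit;
  ginv_cont : continuous ginv;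
  gmul_cont : {within [set p : garr * garr | gs p.1 = gr p.2],
                 continuous (fun p => gmul p.1 p.2)}
}.

Definition is_action (K : topGroupoid) (X : topologicalType)
    (rho : X -> gobj K) (act : garr K -> X -> X) : Prop :=
  [/\ continuous rho,
      {within [set p : garr K * X | gs p.1 = rho p.2],
         continuous (fun p => act p.1 p.2)},
      (forall k x, gs k = rho x -> rho (act k x) = gr k),
      (forall k1 k2 x, gs k1 = gr k2 -> gs k2 = rho x ->
          act k1 (act k2 x) = act (gmul k1 k2) x) &
      (forall x, act (gunit (rho x)) x = x)].

Record action (K : topGroupoid) (X : topologicalType) := Action {
  anchor : X -> gobj K;
  actf : garr K -> X -> X;
  actionP : is_action anchor actf
}.

Definition equivariant (K : topGroupoid) (X Y : topologicalType)
    (a : action K X) (b : action K Y) (f : X -> Y) : Prop :=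
  (forall x, anchor b (f x) = anchor a x) /\
  (forall k x, gs k = anchor a x -> f (actf a k x) = actf b k (f x)).

(* Since Forget o F
   = Forget, F sends an H-space (X,a) to a G-space with the same underlying
   space X, and sends each morphism f to the same continuous map f; the
   functor laws are then automatic, and the only requirement is that
   F is well defined on morphisms: every continuous H-equivariant map is
   G-equivariant for the image structures. *)
Record forget_functor (G H : topGroupoid) := ForgetFunctor {
  Fobj : forall X : topologicalType, action H X -> action G X;
  Fmor : forall (X Y : topologicalType) (a : action H X) (b : action H Y)
           (f : X -> Y), continuous f -> equivariant a b f ->
           equivariant (Fobj a) (Fobj b) f
}.

Definition commutes_with_right_translation (G H : topGroupoid)
    (alpha : action G (garr H)) : Prop :=
  [/\ (forall h h', gs h = gr h' -> anchor alpha (gmul h h') = anchor alpha h),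
      (forall g h, gs g = anchor alpha h -> gs (actf alpha g h) = gs h) &
      (forall g h h', gs g = anchor alpha h -> gs h = gr h' ->
          actf alpha g (gmul h h') = gmul (actf alpha g h) h')].

Record alg_morphism (G H : topGroupoid) := AlgMorphism {
  amact : action G (garr H);
  amP : commutes_with_right_translation amact
}.

Definition same_action (K : topGroupoid) (X : topologicalType)
    (rho : X -> gobj K) (act : garr K -> X -> X) (b : action K X) : Prop :=
  (forall x, anchor b x = rho x) /\
  (forall k x, gs k = rho x -> actf b k x = act k x).

Section Induced.
Variables (G H : topGroupoid) (alpha : alg_morphism G H).
Variables (X : topologicalType) (a : action H X).

(* The fibred product {(h,x) | s h = rho_X x} underlying H^(1) x_H X. *)
Definition fibprod : set (garr H * X) := [set p | gs p.1 = anchor a p.2].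

Definition bal_map (p : garr H * X) : X := actf a p.1 p.2.

(* The relation (y.h, x) ~ (y, h.x) defining the balanced product. *)
Definition bal_rel (p q : garr H * X) : Prop :=
  exists h, [/\ gs q.1 = gr h, gs h = anchor a p.2,
               p.1 = gmul q.1 h & q.2 = actf a h p.2].

Definition bal_act (g : garr G) (p : garr H * X) : garr H * X :=
  (actf (amact alpha) g p.1, p.2).

(* The G-action on X transported along H^(1) x_H X ~= X, [h,x] |-> h.x,
   whose inverse is x |-> [1_{rho x}, x]:
     anchor x = varrho(1_{rho_X x}),   g.x = (g.1_{rho_X x}).x          *)
Definition ind_anchor (x : X) : gobj G :=
  anchor (amact alpha) (gunit (anchor a x)).
Definition ind_act (g : garr G) (x : X) : X :=
  actf a (actf (amact alpha) g (gunit (anchor a x))) x.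

End Induced.

(* Main.v *)
Require Import Defs.
From HB Require Import structures.
From mathcomp Require Import all_boot all_classical.
From mathcomp Require Import topology.
From mathcomp Require Import subspace_topology subtype_topology initial_topology.
Local Open Scope classical_set_scope.
Set Implicit Arguments. Unset Strict Implicit.
Lemma cont_fst {T U : topologicalType} : continuous (@fst T U).
Proof. by move=> x; exact: cvg_fst. Qed.
Lemma cont_snd {T U : topologicalType} : continuous (@snd T U).
Proof. by move=> x; exact: cvg_snd. Qed.
Lemma cont_pair {T U V : topologicalType} (f : T -> U) (g : T -> V) :
  continuous f -> continuous g -> continuous (fun x => (f x, g x)).
Proof. by move=> cf cg x; apply: cvg_pair; [exact: cf | exact: cg]. Qed.

Lemma wpair {T U V : topologicalType} (A : set T) (f : T -> U) (g : T -> V) :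
 {within A, continuous f} -> {within A, continuous g} ->
 {within A, continuous (fun x => (f x, g x))}.
Proof. by move=> cf cg x; apply: cvg_pair; [exact: cf | exact: cg]. Qed.

Lemma wcomp {T U V : topologicalType} (A : set T) (B : set U) (f : T -> U) (g : U -> V) :
 (forall x, A x -> B (f x)) -> {within A, continuous f} -> {within B, continuous g} ->
 {within A, continuous (g \o f)}.
Proof.
move=> AB /subspace_sigL_continuousP cf /subspace_sigL_continuousP cg.
apply/subspace_sigL_continuousP.
pose f' (x : A) : B := exist _ (f (set_val x)) (mem_set (AB _ (set_mem (valP x)))).
have cf' : continuous f'.
  by apply: (@continuous_comp_initial _ _ _ set_val f'); exact: cf.
by move=> x; exact: (continuous_comp (cf' x) (cg (f' x))).
Qed.

Lemma wglob {T U : topologicalType} (A : set T) (f : T -> U) :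
  continuous f -> {within A, continuous f}.
Proof. exact: continuous_subspaceT. Qed.

Lemma weq {T U : topologicalType} (A : set T) (f g : T -> U) :
  (forall x, A x -> f x = g x) -> {within A, continuous f} -> {within A, continuous g}.
Proof.
move=> fg; apply: subspace_eq_continuous => x /set_mem Ax; exact: fg.
Qed.

Lemma cont_comp {R S T : topologicalType} (f : R -> S) (g : S -> T) :
  continuous f -> continuous g -> continuous (fun x => g (f x)).
Proof. by move=> cf cg x; apply: continuous_comp; [exact: cf | exact: cg]. Qed.
Section Part1.
Variables (G H : topGroupoid) (alpha : alg_morphism G H).
Local Notation al := (amact alpha).

Lemma comm_anchor_unit (h : garr H) : anchor al (gunit (gr h)) = anchor al h.
Proof.
case: (amP alpha) => c1 _ _.
have := c1 _ h (gs_unit (gr h)); rewrite gmul1l => E; by rewrite E.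
Qed.

Lemma ind_is_action (X : topologicalType) (a : action H X) :
  is_action (ind_anchor alpha a) (ind_act alpha a).
Proof.
case: (actionP a) => ca wa aa compa unita.
case: (actionP al) => cl wl al_anch compl unitl.
case: (amP alpha) => c1 c2 c3.
split.
- have -> : ind_anchor alpha a = (anchor al \o (@gunit H)) \o anchor a by [].
  move=> x; apply: continuous_comp; first exact: ca.
  apply: continuous_comp; [exact: gunit_cont | exact: cl].
- apply: (wcomp (B := [set q : garr H * X | gs q.1 = anchor a q.2])
     (g := fun q => actf a q.1 q.2)
     (f := fun p : garr G * X => (actf al p.1 (gunit (anchor a p.2)), p.2))).
  + by move=> p /= Hp; rewrite c2 // gs_unit.
  + apply: wpair; last exact: wglob cont_snd.
    apply: (wcomp (B := [set q : garr G * garr H | gs q.1 = anchor al q.2])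
     (g := fun q => actf al q.1 q.2)
     (f := fun p : garr G * X => (p.1, gunit (anchor a p.2)))) => //.
    apply: wglob; apply: cont_pair; first exact: cont_fst.
    apply: (cont_comp (f := snd) (g := fun y => gunit (anchor a y))); first exact: cont_snd.
    apply: (cont_comp (f := anchor a) (g := @gunit H)); [exact: ca | exact: gunit_cont].
  + exact: wa.
- move=> g x Hg; rewrite /ind_anchor /ind_act.
  have e : gs (actf al g (gunit (anchor a x))) = anchor a x by rewrite c2 // gs_unit.
  by rewrite aa // comm_anchor_unit al_anch.
- move=> g1 g2 x h12 h2x; rewrite /ind_act.
  move: h2x; rewrite /ind_anchor => h2x.
  set u := gunit (anchor a x).
  set k2 := actf al g2 u.
  have gk2 : gs k2 = anchor a x by rewrite /k2 c2 // gs_unit.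
  rewrite (aa _ _ gk2).
  have ak2 : anchor al k2 = gr g2 by rewrite al_anch.
  have h1' : gs g1 = anchor al (gunit (gr k2)) by rewrite comm_anchor_unit ak2.
  have gk1 : gs (actf al g1 (gunit (gr k2))) = gr k2 by rewrite c2 // gs_unit.
  rewrite compa // -c3 ?gs_unit // gmul1l /k2 compl //.
- move=> x; rewrite /ind_act /ind_anchor unitl unita //.
Qed.

Definition ind_action (X : topologicalType) (a : action H X) : action G X :=
  @Action G X _ _ (ind_is_action a).

Lemma ind_mor (X Y : topologicalType) (a : action H X) (b : action H Y)
  (f : X -> Y) : continuous f -> equivariant a b f ->
  equivariant (ind_action a) (ind_action b) f.
Proof.
case: (amP alpha) => c1 c2 c3.
move=> _ [fa fk]; split => [x|g x Hg] /=.
  by rewrite /ind_anchor fa.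
rewrite /ind_act fk; first by rewrite fa.
by rewrite c2 // gs_unit.
Qed.

Definition ind_functor : forget_functor G H := @ForgetFunctor G H ind_action ind_mor.

Lemma part1 (X : topologicalType) (a : action H X) :
        [/\ (forall x : X, exists2 p, fibprod a p & bal_map a p = x),
            (forall p q, fibprod a p -> fibprod a q ->
               (bal_map a p = bal_map a q <-> bal_rel a p q)),
            {within fibprod a, continuous (bal_map a)},
            (forall U : set X, open U <->
               exists2 V : set (garr H * X), open V &
                 fibprod a `&` (bal_map a @^-1` U) = fibprod a `&` V) &
            (forall g p, fibprod a p ->
               gs g = anchor (amact alpha) p.1 ->
               [/\ fibprod a (bal_act alpha g p),
                   ind_anchor alpha a (bal_map a p) = anchor (amact alpha) p.1 &
                   bal_map a (bal_act alpha g p)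
                     = ind_act alpha a g (bal_map a p)])].
Proof.
case: (actionP a) => ca wa aa compa unita.
case: (actionP al) => cl wl al_anch compl unitl.
case: (amP alpha) => c1 c2 c3.
split.
- move=> x; exists (gunit (anchor a x), x); first exact: gs_unit.
  by rewrite /bal_map /= unita.
- case=> p1 p2 [q1 q2]; rewrite /fibprod /bal_map /bal_rel /= => hp hq; split.
  + move=> E.
    have grr : gr p1 = gr q1 by rewrite -(aa _ _ hp) -(aa _ _ hq) E.
    exists (gmul (ginv q1) p1).
    have e1 : gs (ginv q1) = gr p1 by rewrite gs_inv; exact: esym grr.
    split.
    * by rewrite gr_mul // gr_inv.
    * by rewrite gs_mul.
    * by rewrite -gmulA ?gr_inv // gmulV -grr gmul1l.
    * rewrite -compa ?gs_mul ?gr_inv // E compa ?gs_inv //.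
      by rewrite gmulVl hq unita.
  + case=> h [e1 e2 -> ->].
    by rewrite compa.
- exact: wa.
- move=> U; split=> [oU|[V oV e]].
  + have := wa; move/continuousP => /(_ U oU) /open_subspaceP [V oV e].
    exists V => //; by rewrite setIC -e setIC.
  + have -> : U = (fun x => (gunit (anchor a x), x)) @^-1` V.
      apply/seteqP; split => x /=.
      * move=> Ux.
        have : (fibprod a `&` bal_map a @^-1` U) (gunit (anchor a x), x).
          by split; [exact: gs_unit | rewrite /bal_map /= unita].
        by rewrite e => -[].
      * move=> Vx.
        have : (fibprod a `&` V) (gunit (anchor a x), x) by split => //; exact: gs_unit.
        by rewrite -e => -[_]; rewrite /bal_map /= unita.
    have cs : continuous (fun x : X => (gunit (anchor a x), x)).
      apply: cont_pair; last by move=> x; exact: cvg_id.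
      apply: (cont_comp (f := anchor a) (g := @gunit H)); [exact: ca | exact: gunit_cont].
    by move/continuousP: cs; apply.
- move=> g [h x]; rewrite /fibprod /bal_act /bal_map /ind_anchor /ind_act /= => hx Hg.
  split.
  + by rewrite c2.
  + by rewrite aa // comm_anchor_unit.
  + rewrite aa // compa ?c2 ?gs_unit -?c3 ?gs_unit ?gmul1l //.
      by rewrite comm_anchor_unit.
    by rewrite comm_anchor_unit.
Qed.

End Part1.
Section Part2.
Variables (G H : topGroupoid) (F : forget_functor G H).

Lemma Hleft_is_action : is_action (@gr H) (@gmul H).
Proof.
split.
- exact: gr_cont.
- exact: gmul_cont.
- by move=> k x e; rewrite gr_mul.
- by move=> k1 k2 x e1 e2; rewrite gmulA.
- by move=> x; rewrite gmul1l.
Qed.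
Definition Hleft : action H (garr H) := Action Hleft_is_action.

Lemma HP_is_action (Y : topologicalType) :
  is_action (fun p : garr H * Y => gr p.1) (fun k p => (gmul k p.1, p.2)).
Proof.
split.
- apply: (cont_comp (f := fst) (g := @gr H)); [exact: cont_fst | exact: gr_cont].
- apply: wpair; last first.
    apply: wglob; apply: (cont_comp (f := snd) (g := snd)); exact: cont_snd.
  apply: (wcomp (B := [set p : garr H * garr H | gs p.1 = gr p.2])
     (g := fun q => gmul q.1 q.2)
     (f := fun p : garr H * (garr H * Y) => (p.1, p.2.1))) => //.
    apply: wglob; apply: cont_pair; first exact: cont_fst.
    apply: (cont_comp (f := snd) (g := fst)); [exact: cont_snd | exact: cont_fst].
  exact: gmul_cont.
- by move=> k x e; rewrite gr_mul.
- by move=> k1 k2 x e1 e2; rewrite gmulA.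
- by case=> h y /=; rewrite gmul1l.
Qed.
Definition HP (Y : topologicalType) : action H (garr H * Y)%type := Action (HP_is_action Y).

Local Notation alpha0 := (Fobj F Hleft).

Lemma P_lemma (Y : topologicalType) (p : garr H * Y) :
  anchor (Fobj F (HP Y)) p = anchor alpha0 p.1 /\
  forall g, gs g = anchor alpha0 p.1 ->
    actf (Fobj F (HP Y)) g p = (actf alpha0 g p.1, p.2).
Proof.
have e1 : equivariant (HP Y) Hleft fst by split.
have [m1 m2] := Fmor F (@cont_fst _ _) e1.
have e2 : equivariant (HP Y) (HP Y) (fun q => (q.1, p.2)) by split.
have [_ n2] := Fmor F (cont_pair (@cont_fst _ _) (@cst_continuous _ _ p.2)) e2.
split; first by rewrite m1.
move=> g Hg.
have Hg' : gs g = anchor (Fobj F (HP Y)) p by rewrite -m1.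
have := n2 _ _ Hg'; have := m2 _ _ Hg'.
clear e1 e2; case: p Hg Hg' n2 m1 m2 => h y /= _ Hg' n2 _ m2 => -> <-.
by [].
Qed.

Section S.
Variables (X : topologicalType) (a : action H X).
Local Notation A := (fibprod a).

Definition Sact (k : garr H) (s : A) : A := insubd s (gmul k (val s).1, (val s).2).

Lemma Sact_val k (s : A) : gs k = gr (val s).1 -> val (Sact k s) = (gmul k (val s).1, (val s).2).
Proof.
move=> e; rewrite /Sact val_insubd mem_set //.
have := set_mem (valP s); rewrite /fibprod /= => hs.
by rewrite gs_mul.
Qed.

Lemma HS_is_action : is_action (fun s : A => gr (val s).1) Sact.
Proof.
have cv : continuous (fun s : A => val s) := @initial_continuous A _ set_val.
split.
- apply: (cont_comp (f := fun s : A => (val s).1) (g := @gr H)); last exact: gr_cont.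
  apply: (cont_comp (f := fun s : A => val s) (g := fst)); [exact: cv | exact: cont_fst].
- apply: (@continuous_comp_initial _ _ _ set_val).
  apply: (weq (f := fun q : garr H * A => (gmul q.1 (val q.2).1, (val q.2).2))).
    by move=> q /= e; rewrite set_valE /= Sact_val.
  apply: wpair; last first.
    apply: wglob; apply: (cont_comp (f := fun q : garr H * A => val q.2) (g := snd)); last exact: cont_snd.
    apply: (cont_comp (f := snd) (g := fun s : A => val s)); [exact: cont_snd | exact: cv].
  apply: (wcomp (B := [set p : garr H * garr H | gs p.1 = gr p.2])
     (g := fun q => gmul q.1 q.2)
     (f := fun q : garr H * A => (q.1, (val q.2).1))) => //.
    apply: wglob; apply: cont_pair; first exact: cont_fst.
    apply: (cont_comp (f := snd) (g := fun s : A => (val s).1)); first exact: cont_snd.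
    apply: (cont_comp (f := fun s : A => val s) (g := fst)); [exact: cv | exact: cont_fst].
  exact: gmul_cont.
- by move=> k s e; rewrite Sact_val // gr_mul.
- move=> k1 k2 s e1 e2; apply: val_inj.
  have e1' : gs k1 = gr (val (Sact k2 s)).1.
    rewrite Sact_val //=; exact: (etrans e1 (esym (gr_mul e2))).
  have e3 : gs (gmul k1 k2) = gr (val s).1 by rewrite (gs_mul e1).
  rewrite (Sact_val e1') (Sact_val e2) (Sact_val e3) /=.
  by rewrite (gmulA e1 e2).
- move=> s; apply: val_inj; rewrite Sact_val /= ?gs_unit // gmul1l.
  by case: (val s).
Qed.

Definition HS : action H A := Action HS_is_action.

Lemma S_lemma (h : garr H) (x : X) : gs h = anchor a x ->
  anchor (Fobj F a) (actf a h x) = anchor alpha0 h /\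
  forall g, gs g = anchor alpha0 h ->
    actf a (actf alpha0 g h) x = actf (Fobj F a) g (actf a h x).
Proof.
move=> hx.
case: (actionP a) => ca wa aa compa unita.
pose s : A := exist _ (h, x) (mem_set hx).
have cv : continuous (fun s : A => val s) := @initial_continuous A _ set_val.
have ei : equivariant HS (HP X) (fun s : A => val s).
  split => // k t e /=; by rewrite Sact_val.
have [i1 i2] := Fmor F cv ei.
have cp : continuous (fun s : A => actf a (val s).1 (val s).2).
  by move/subspace_sigL_continuousP: wa.
have ep : equivariant HS a (fun s : A => actf a (val s).1 (val s).2).
  split.
    move=> t /=; apply: aa; exact: (set_mem (valP t)).
  move=> k t /= e; rewrite Sact_val //= compa //; exact: (set_mem (valP t)).
have [p1 p2] := Fmor F cp ep.
have [P1 P2] := P_lemma (val s).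
split.
  by have := p1 s; rewrite /= => ->; rewrite -i1 P1.
move=> g Hg.
have Hg' : gs g = anchor (Fobj F HS) s by rewrite -i1 P1.
have := p2 _ _ Hg'; rewrite /= => <-.
by rewrite i2 // P2.
Qed.

End S.

Lemma alpha_comm : commutes_with_right_translation alpha0.
Proof.
split.
- move=> h h' e; have [E _] := S_lemma (a:=Hleft) e; exact: E.
- move=> g h Hg.
  have cm : continuous (fun h : garr H => (h, gs h)).
    apply: cont_pair; [by move=> x; exact: cvg_id | exact: gs_cont].
  have em : equivariant Hleft (HP (gobj H)) (fun h : garr H => (h, gs h)).
    by split => // k x e /=; rewrite gs_mul.
  have [_ m2] := Fmor F cm em.
  have [_ P2] := P_lemma (h, gs h).
  by have := m2 _ _ Hg; rewrite P2 // => -[].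
- move=> g h h' Hg e; have [_ E] := S_lemma (a:=Hleft) e; exact: esym (E _ Hg).
Qed.

Definition alphaF : alg_morphism G H := AlgMorphism alpha_comm.

Lemma part2 (X : topologicalType) (a : action H X) :
  same_action (ind_anchor alphaF a) (ind_act alphaF a) (Fobj F a).
Proof.
case: (actionP a) => ca wa aa compa unita.
have hx x : gs (gunit (anchor a x)) = anchor a x by exact: gs_unit.
split.
- move=> x; have [E _] := S_lemma (hx x); rewrite unita in E; exact: E.
- move=> k x e; have [_ E] := S_lemma (hx x).
  by have := E _ e; rewrite unita => <-.
Qed.

End Part2.
Unset Implicit Arguments.
Theorem theorem4p12 (G H : topGroupoid) :
  (* (1) every algebraic morphism induces a Forget-preserving functor,
         given by transport along the homeomorphism H^(1) x_H X ~= X *)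
  (forall alpha : alg_morphism G H,
     (forall (X : topologicalType) (a : action H X),
        (* [h,x] |-> h.x is a homeomorphism H^(1) x_H X -> X which is
           G-equivariant for the action g.[h,x] = [g.h,x] and the transported
           action: surjective, identifies exactly ~-related pairs, is a
           quotient map, and intertwines the actions *)
        [/\ (forall x : X, exists2 p, fibprod a p & bal_map a p = x),
            (forall p q, fibprod a p -> fibprod a q ->
               (bal_map a p = bal_map a q <-> bal_rel a p q)),
            {within fibprod a, continuous (bal_map a)},
            (forall U : set X, open U <->
               exists2 V : set (garr H * X), open V &
                 fibprod a `&` (bal_map a @^-1` U) = fibprod a `&` V) &
            (forall g p, fibprod a p ->
               gs g = anchor (amact alpha) p.1 ->
               [/\ fibprod a (bal_act alpha g p),
                   ind_anchor alpha a (bal_map a p) = anchor (amact alpha) p.1 &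
                   bal_map a (bal_act alpha g p)
                     = ind_act alpha a g (bal_map a p)])]) /\
     exists F : forget_functor G H,
       forall (X : topologicalType) (a : action H X),
         same_action (ind_anchor alpha a) (ind_act alpha a) (Fobj F a))
  /\
  (* (2) every Forget-preserving functor arises this way *)
  (forall F : forget_functor G H,
     exists alpha : alg_morphism G H,
       forall (X : topologicalType) (a : action H X),
         same_action (ind_anchor alpha a) (ind_act alpha a) (Fobj F a)).
Proof.
split.
- move=> alpha; split.
    move=> X a; exact: part1.
  exists (ind_functor alpha); move=> X a; by split.
- move=> F; exists (alphaF F); move=> X a; exact: part2.
Qed.
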